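(* Let $\boldsymbol{\psi}=(\psi_k)_{k\in\mathbb{K}}$ be a regularization of $\psi:\mathcal{M}\to\Theta$ which is continuous at the data-generating distribution $P\in\mathcal{M}$ with respect to a distance $d$, with family of moduli of continuity $(\delta_k)_{k\in\mathbb{K}}$, and suppose there exists a real-valued positive diverging sequence $(r_n)_{n\in\mathbb{N}}$ such that $d(P_n,P)=o_P(r_n^{-1})$. Let $\bar B$, $\bar\delta$, $\mathcal{G}_n$ and $\tilde k_n$ be as in the context. Then $$\|\psi_{\tilde k_n}(P_n)-\psi(P)\|_\Theta=O_P\left(\inf_{k\in\mathcal{G}_n}\{\bar\delta_k(r_n^{-1})+\bar B_k(P)\}\right).$$
   Context: Setting: $\mathbb{Z}\subseteq\mathbb{R}^d$; data $Z_1,Z_2,\dots$ IID with law $P$; $\mathbf{P}$ the product probability on $\mathbb{Z}^\infty$ (to which $o_P,O_P$ refer); $ca(\mathbb{Z})$ the signed Borel measures of finite variation; $\mathcal{D}$ the discretely supported probability measures; $P_n=n^{-1}\sum_{i\le n}\delta_{Z_i}$. $\mathcal{M}$ is a set of Borel probability measures on $\mathbb{Z}$, $(\Theta,\|\cdot\|_\Theta)$ a normed space, $\mathbb{K}\subseteq\mathbb{R}_+$ unbounded above. A regularization is a family $(\psi_k)_{k\in\mathbb{K}}$, $\psi_k:\mathbb{D}_\psi\subseteq ca(\mathbb{Z})\to\Theta$, $\mathbb{D}_\psi\supseteq\mathcal{M}\cup\mathcal{D}$, with $\|\psi_k(Q)-\psi(Q)\|_\Theta\to0$ as $k\to\infty$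 for all $Q\in\mathcal{M}$. A modulus of continuity is a continuous non-decreasing $f:\mathbb{R}_+\to\mathbb{R}_+$ with $f(t)=0$ iff $t=0$; continuity at $P$ w.r.t. $d$ means moduli $(\delta_k)$ with $\|\psi_k(P')-\psi_k(P)\|_\Theta\le\delta_k(d(P',P))$ for all $k$ and $P'\in\mathbb{D}_\psi$. Objects: $k\mapsto\bar B_k(P)$ is a non-increasing function $\mathbb{R}_+\to\mathbb{R}_+$ with $\bar B_k(P)\ge\|\psi_k(P)-\psi(P)\|_\Theta$ for all $k\ge0$ and $\lim_{k\to\infty}\bar B_k(P)=0$; for each $n$, $k\mapsto\bar\delta_k(r_n^{-1})$ is a non-decreasing function $\mathbb{R}_+\to\mathbb{R}_+$ with $\bar\delta_k(r_n^{-1})\ge\delta_k(r_n^{-1})$. For each $n$, $\mathcal{G}_n$ is a (user-specified) finite subset of $\mathbb{K}$. Define $$\mathcal{L}_n=\{k\in\mathcal{G}_n:\ \|\psi_k(P_n)-\psi_{k'}(P_n)\|_\Theta\le4\bar\delta_{k'}(r_n^{-1})\ \text{for all }k'\ge k,\ k'\in\mathcal{G}_n\},$$ and $\tilde k_n=\min\{k:k\in\mathcal{L}_n\}$. *)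

(* Defs.v *)
From HB Require Import structures.
From mathcomp Require Import all_boot all_order all_algebra.
From mathcomp Require Import all_classical all_reals all_analysis.

Set Implicit Arguments.
Unset Strict Implicit.
Unset Printing Implicit Defensive.

Import Order.TTheory GRing.Theory Num.Theory.
Import numFieldNormedType.Exports.

Local Open Scope classical_set_scope.
Local Open Scope ring_scope.

Definition borel_Rd (R : realType) (d : nat) : set (set 'rV[R]_d) :=
  <<s [set O : set 'rV[R]_d | open O] >>.

(* The measurable space T "is" a subset Z = iota(T) of R^d equipped with the
   trace of the Borel sigma-algebra. *)
Definition borel_subset_of_Rd (R : realType) (d : nat) (dT : measure_display)
    (T : measurableType dT) (iota : T -> 'rV[R]_d) : Prop :=
  injective iota /\
  forall A : set T, measurable A <-> exists B, borel_Rd B /\ A = iota @^-1` B.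

Definition same_measure dT (T : measurableType dT) (R : realType)
  (mu nu : charge T R) : Prop := forall A, measurable A -> mu A = nu A.

Definition is_prob_charge dT (T : measurableType dT) (R : realType)
  (mu : charge T R) : Prop :=
  (forall A, measurable A -> (0 <= mu A)%E) /\ mu setT = 1%E.

Definition is_discrete_prob dT (T : measurableType dT) (R : realType)
  (mu : charge T R) : Prop :=
  exists (x : nat -> T) (w : nat -> R),
    (forall i, 0 <= w i) /\
    (\sum_(0 <= i <oo) (w i)%:E = 1)%E /\
    forall A, measurable A ->
      mu A = (\sum_(0 <= i <oo) (w i * \1_A (x i))%:E)%E.

Definition is_empirical dT (T : measurableType dT) (R : realType)
  (n : nat) (z : nat -> T) (mu : charge T R) : Prop :=
  forall A, measurable A ->
    mu A = (n%:R^-1 * \sum_(i < n) \1_A (z i))%:E.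

Definition iid_with_law dO (Omega : measurableType dO) dT (T : measurableType dT)
  (R : realType) (Pr : probability Omega R) (Z : nat -> Omega -> T)
  (P : charge T R) : Prop :=
  (forall i, measurable_fun setT (Z i)) /\
  (forall i A, measurable A -> Pr (Z i @^-1` A) = P A) /\
  (forall (n : nat) (B : nat -> set T), (forall i, measurable (B i)) ->
     Pr (\bigcap_(i in `I_n) (Z i @^-1` B i)) =
     (\prod_(i < n) Pr (Z i @^-1` B i))%E).

Definition Pstar dO (Omega : measurableType dO) (R : realType)
  (Pr : probability Omega R) (A : set Omega) : \bar R :=
  ereal_inf [set Pr B | B in [set B | measurable B /\ A `<=` B]].

Definition little_oP dO (Omega : measurableType dO) (R : realType)
  (Pr : probability Omega R) (X : nat -> Omega -> R) (a : nat -> R) : Prop :=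
  forall eps : R, 0 < eps ->
    (fun n => Pstar Pr [set w | eps * a n < `|X n w|]) @ \oo --> 0%E.

Definition big_OP dO (Omega : measurableType dO) (R : realType)
  (Pr : probability Omega R) (X : nat -> Omega -> R) (a : nat -> R) : Prop :=
  forall eps : R, 0 < eps -> exists M : R, 0 < M /\
    exists N : nat, forall n, (N <= n)%N ->
      (Pstar Pr [set w | (M * a n < `|X n w|)%R] <= eps%:E)%E.

Definition modulus (R : realType) (f : R -> R) : Prop :=
  {within [set t : R | 0 <= t], continuous f} /\
  (forall s t, 0 <= s -> s <= t -> f s <= f t) /\
  (forall t, 0 <= t -> 0 <= f t) /\
  (forall t, 0 <= t -> (f t = 0 <-> t = 0)).

Definition seqmin (R : realType) (s : seq R) : R :=
  \big[Order.min/head 0 s]_(x <- s) x.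

Definition lepski_set (R : realType) (V : normedModType R) (G : seq R)
  (est : R -> V) (dbar : R -> R) : seq R :=
  [seq k <- G | all (fun k' => (k <= k') ==> (`|est k - est k'| <= 4 * dbar k')) G].

(* Main.v *)
Require Import Defs.
From HB Require Import structures.
From mathcomp Require Import all_boot all_order all_algebra.
From mathcomp Require Import all_classical all_reals all_analysis.
From mathcomp Require Import lra.
Import Order.TTheory GRing.Theory Num.Theory.
Import numFieldNormedType.Exports.
Local Open Scope classical_set_scope.
Local Open Scope ring_scope.

Lemma bigmin_le (R : realType) (x0 : R) (s : seq R) y :
  y \in x0 :: s -> \big[Order.min/x0]_(x <- s) x <= y.
Proof.
elim: s y => [|a s IH] y; first by rewrite big_nil inE => /eqP ->.
rewrite big_cons ge_min !inE => /or3P [/eqP ->|/eqP ->|hy].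
- by apply/orP; right; apply: IH; rewrite inE eqxx.
- by rewrite lexx.
- by apply/orP; right; apply: IH; rewrite inE hy orbT.
Qed.

Lemma bigmin_mem (R : realType) (x0 : R) (s : seq R) :
  \big[Order.min/x0]_(x <- s) x \in x0 :: s.
Proof.
elim: s => [|a s IH]; first by rewrite big_nil inE.
rewrite big_cons /Order.min; case: ifP => _; first by rewrite !inE eqxx orbT.
move: IH; rewrite !inE => /orP [h|h]; by rewrite h ?orbT.
Qed.

Lemma seqmin_le (R : realType) (s : seq R) y : y \in s -> seqmin s <= y.
Proof. case: s => [//|a s] hy; rewrite /seqmin /=; apply: bigmin_le; by rewrite inE hy orbT. Qed.

Lemma seqmin_mem (R : realType) (s : seq R) : s != [::] -> seqmin s \in s.
Proof.
case: s => [//|a s] _; rewrite /seqmin /=.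
have := @bigmin_mem R a (a :: s); rewrite inE => /orP [/eqP ->|//].
by rewrite inE eqxx.
Qed.

Lemma exists_max (R : realType) (P : pred R) (s : seq R) :
  has P s -> exists2 j, j \in s & P j /\ forall j', j' \in s -> P j' -> j' <= j.
Proof.
elim: s => [//|a s IH] /=.
case hs: (has P s).
- case: (IH hs) => j js [Pj hj] _.
  case Pa: (P a).
  + case: (leP a j) => haj.
    * exists j; first by rewrite inE js orbT.
      split => // j'; rewrite inE => /orP [/eqP ->|]; [by []|exact: hj].
    * exists a; first by rewrite inE eqxx.
      split => // j'; rewrite inE => /orP [/eqP ->|h1 h2]; first by [].
      by apply: le_trans (hj _ h1 h2) (ltW haj).
  + exists j; first by rewrite inE js orbT.
    split => // j'; rewrite inE => /orP [/eqP ->|]; [by rewrite Pa|exact: hj].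
- rewrite orbF => Pa; exists a; first by rewrite inE eqxx.
  split => // j'; rewrite inE => /orP [/eqP ->//|h1 h2].
  by move/hasPn: hs => /(_ _ h1); rewrite h2.
Qed.

Lemma eseries_fin (R : realType) (f : nat -> R) n :
  (forall i, (n <= i)%N -> f i = 0) ->
  (\sum_(0 <= i <oo) (f i)%:E = (\sum_(i < n) f i)%:E)%E.
Proof.
move=> hf; apply: lim_near_cst => //.
exists n => // N /= hN.
rewrite sumEFin (@big_cat_nat _ _ _ n 0 N _ _ (leq0n n) hN) /= big_mkord.
have -> : \sum_(n <= i < N) f i = 0.
  by rewrite big_nat_cond big1 // => i /andP [/andP [hi _] _]; exact: hf.
by rewrite addr0.
Qed.

Lemma core (R : realType) (V : normedModType R) (G : seq R) (est tr : R -> V)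
  (t : V) (dbar Bbar : R -> R)
  (hG0 : forall k, k \in G -> 0 <= k)
  (hdbm : forall k k', 0 <= k -> k <= k' -> dbar k <= dbar k')
  (hBm : forall k k', 0 <= k -> k <= k' -> Bbar k' <= Bbar k)
  (hvar : forall k, k \in G -> `|est k - tr k| <= dbar k)
  (hbias : forall k, k \in G -> `|tr k - t| <= Bbar k)
  (hGne : G != [::]) :
  `|est (seqmin (lepski_set G est dbar)) - t| <=
    6 * seqmin [seq dbar k + Bbar k | k <- G].
Proof.
have hd0 : forall k, k \in G -> 0 <= dbar k.
  by move=> k kG; apply: le_trans (hvar k kG).
have hB0 : forall k, k \in G -> 0 <= Bbar k.
  by move=> k kG; apply: le_trans (hbias k kG).
have : seqmin [seq dbar k + Bbar k | k <- G] \in [seq dbar k + Bbar k | k <- G].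
  by apply: seqmin_mem; case: G hGne {hG0 hvar hbias hd0 hB0}.
case/mapP => k kG ->.
set P := fun j => (k <= j) && (dbar j <= dbar k + Bbar k).
have hP : has P G.
  by apply/hasP; exists k => //; rewrite /P lexx /= lerDl hB0.
case: (@exists_max _ _ _ hP) => j jG [/andP [hkj hdj] hmax].
have hBj : Bbar j <= Bbar k by apply: hBm => //; exact: hG0.
have jL : j \in lepski_set G est dbar.
  rewrite mem_filter jG andbT; apply/allP => k' k'G; apply/implyP => hjk'.
  case: (leP k' j) => hk'j.
    have -> : k' = j by apply/eqP; rewrite eq_le hk'j hjk'.
    by rewrite subrr normr0 mulr_ge0 // hd0.
  have hdk' : dbar k + Bbar k < dbar k'.
    rewrite ltNge; apply/negP => h.
    have := hmax k' k'G; rewrite /P h (le_trans hkj hjk') => /(_ isT).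
    by rewrite leNgt hk'j.
  have hBk' : Bbar k' <= Bbar k.
    by apply: hBm; [exact: hG0 | exact: le_trans hkj hjk'].
  have e1 := ler_distD (tr j) (est j) (est k').
  have e2 := ler_distD t (tr j) (est k').
  have e3 := ler_distD (tr k') t (est k').
  have v1 := hvar j jG; have v2 := hvar k' k'G.
  have b1 := hbias k' k'G; rewrite distrC in v2; rewrite distrC in b1.
  have b2 := hbias j jG.
  have := hd0 k kG; have := hB0 k kG.
  move=> *; lra.
have ktL : seqmin (lepski_set G est dbar) \in lepski_set G est dbar.
  by apply: seqmin_mem; case: (lepski_set G est dbar) jL.
have ktj : seqmin (lepski_set G est dbar) <= j by exact: seqmin_le.
move: ktL; set kt := seqmin _; rewrite mem_filter => /andP [/allP hall ktG].
have := hall j jG; rewrite ktj /= => h4.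
have e1 := ler_distD (est j) (est kt) t.
have e2 := ler_distD (tr j) (est j) t.
have v1 := hvar j jG; have b2 := hbias j jG.
have := hd0 k kG; have := hB0 k kG.
move=> *; lra.
Qed.

Lemma emp_discrete dT (T : measurableType dT) (R : realType) n (z : nat -> T)
  (mu : charge T R) : (0 < n)%N -> is_empirical n z mu -> is_discrete_prob mu.
Proof.
move=> hn hmu.
exists z, (fun i => if (i < n)%N then n%:R^-1 else 0); split; [|split].
- by move=> i; case: ifP => // _; rewrite invr_ge0 ler0n.
- rewrite (@eseries_fin _ _ n); last by move=> i hi; rewrite ifF // ltnNge hi.
  congr (_%:E).
  rewrite (eq_bigr (fun _ => n%:R^-1)); last by move=> i _; rewrite ltn_ord.
  by rewrite sumr_const card_ord -[_ *+ n]mulr_natr mulVf // pnatr_eq0 -lt0n.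
- move=> A hA; rewrite hmu //.
  rewrite (@eseries_fin _ _ n); last by move=> i hi; rewrite ifF ?mul0r // ltnNge hi.
  congr (_%:E); rewrite mulr_sumr; apply: eq_bigr => i _; by rewrite ltn_ord.
Qed.

Theorem theorem2
  (R : realType) (d : nat)
  (* sample space Z subset of R^d, with trace Borel sigma-algebra *)
  (dT : measure_display) (T : measurableType dT) (iota : T -> 'rV[R]_d)
  (hT : borel_subset_of_Rd iota)
  (* probability space carrying the data *)
  (dO : measure_display) (Omega : measurableType dO) (Pr : probability Omega R)
  (* model M, parameter space Theta, index set K *)
  (M : set (charge T R)) (hM : forall Q, M Q -> is_prob_charge Q)
  (Theta : normedModType R)
  (K : set R) (hK0 : forall k, K k -> 0 <= k)
  (hKub : forall m : R, exists k, K k /\ m < k)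
  (* regularization psi_k of psi, defined on D_psi *)
  (Dpsi : set (charge T R))
  (hDM : M `<=` Dpsi) (hDD : [set Q | is_discrete_prob Q] `<=` Dpsi)
  (psi : charge T R -> Theta) (psik : R -> charge T R -> Theta)
  (hreg : forall Q, M Q -> forall eps : R, 0 < eps -> exists k0 : R,
            forall k, K k -> k0 <= k -> `|psik k Q - psi Q| <= eps)
  (* data *)
  (P : charge T R) (hP : M P)
  (Z : nat -> Omega -> T) (hZ : iid_with_law Pr Z P)
  (Pn : nat -> Omega -> charge T R)
  (hPn : forall n w, is_empirical n (fun i => Z i w) (Pn n w))
  (* distance d on D_psi *)
  (dist : charge T R -> charge T R -> R)
  (hd0 : forall x y, Dpsi x -> Dpsi y -> 0 <= dist x y)
  (hdeq : forall x y, Dpsi x -> Dpsi y -> (dist x y = 0 <-> same_measure x y))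
  (hdsym : forall x y, Dpsi x -> Dpsi y -> dist x y = dist y x)
  (hdtri : forall x y z, Dpsi x -> Dpsi y -> Dpsi z ->
             dist x z <= dist x y + dist y z)
  (* continuity at P with moduli delta_k *)
  (delta : R -> R -> R)
  (hmod : forall k, K k -> modulus (delta k))
  (hcont : forall k, K k -> forall P', Dpsi P' ->
             `|psik k P' - psik k P| <= delta k (dist P' P))
  (* rate r_n *)
  (r : nat -> R) (hrpos : forall n, 0 < r n) (hrdiv : r n @[n --> \oo] --> +oo)
  (hrate : little_oP Pr (fun n w => dist (Pn n w) P) (fun n => (r n)^-1))
  (* bias bound Bbar *)
  (Bbar : R -> R)
  (hB0 : forall k, 0 <= k -> 0 <= Bbar k)
  (hBmono : forall k k', 0 <= k -> k <= k' -> Bbar k' <= Bbar k)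
  (hBbound : forall k, K k -> `|psik k P - psi P| <= Bbar k)
  (hBlim : Bbar k @[k --> +oo] --> 0)
  (* variance bound dbar n k = \bar delta_k(r_n^-1) *)
  (dbar : nat -> R -> R)
  (hdb0 : forall n k, 0 <= k -> 0 <= dbar n k)
  (hdbmono : forall n k k', 0 <= k -> k <= k' -> dbar n k <= dbar n k')
  (hdbbound : forall n k, K k -> delta k (r n)^-1 <= dbar n k)
  (* grids G_n *)
  (G : nat -> seq R) (hGK : forall n k, k \in G n -> K k)
  (hGne : forall n, G n != [::]) :
  let ktilde := fun n w =>
    seqmin (lepski_set (G n) (fun k => psik k (Pn n w)) (dbar n)) in
  big_OP Pr (fun n w => `|psik (ktilde n w) (Pn n w) - psi P|)
           (fun n => seqmin [seq dbar n k + Bbar k | k <- G n]).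
Proof.
move=> ktilde eps heps.
exists 6; split; first by [].
have hPD : Dpsi P by apply: hDM.
have hD : forall n w, (0 < n)%N -> Dpsi (Pn n w).
  by move=> n w hn; apply: hDD; exact: (@emp_discrete _ _ _ _ _ _ hn (hPn n w)).
have := @hrate 1 ltr01 _ (nbhs_open_ereal_lt (f := fun _ => eps) heps).
case=> N _ HN.
exists (maxn N 1) => n hn.
have hn0 : (0 < n)%N by apply: leq_trans hn; rewrite leq_max leqnn orbT.
have hNn : (N <= n)%N by apply: leq_trans hn; rewrite leq_max leqnn.
apply: le_trans (ltW (HN n hNn)).
apply: ereal_inf_le_tmp => _ [B [hB hsub] <-]; exists B => //; split => //.
apply: subset_trans hsub => w /=; rewrite mul1r => h.
rewrite ltNge; apply/negP => hd; move: h; rewrite ltNge => /negP; apply.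
have hdn : 0 <= dist (Pn n w) P by apply: hd0 => //; exact: hD.
have hdr : dist (Pn n w) P <= (r n)^-1 by apply: le_trans hd; exact: ler_norm.
rewrite /ktilde normr_id.
apply: (@core R Theta (G n) (fun k => psik k (Pn n w)) (fun k => psik k P) (psi P) (dbar n) Bbar).
- by move=> k kG; apply: hK0; exact: hGK kG.
- by move=> k k' h0 h1; exact: hdbmono.
- by move=> k k' h0 h1; exact: hBmono.
- move=> k kG /=; have hk := hGK _ _ kG.
  apply: le_trans (hcont k hk _ (hD n w hn0)) _.
  apply: le_trans (hdbbound n k hk).
  have [_ [hm _]] := hmod k hk; apply: hm => //.
- by move=> k kG; apply: hBbound; exact: hGK kG.
- exact: hGne.
Qed.
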